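(* Let $q=2$ and $2\leq z\leq 4$. Consider the mean-field equation in $u\in[0,1)$, $$u=\frac{1-\exp(\Delta_{\beta,2,z}(u))}{1+\exp(\Delta_{\beta,2,z}(u))},\qquad\Delta_{\beta,2,z}(u):=-\frac{\beta}{2^{z-1}}\Big[(1+u)^{z-1}-(1-u)^{z-1}\Big].$$ There exists a single $\beta_1(2,z)>0$ such that for $0<\beta\leq\beta_1$ the mean-field equation has only the trivial solution $u=0$, and for $\beta>\beta_1$ it has exactly one additional solution $0<u_1<1$. *)

(* Defs.v *)
From Stdlib Require Import Reals.
Open Scope R_scope.

Definition Delta2 (beta : R) (z : nat) (u : R) : R :=
  - (beta / 2 ^ (z - 1)) * ((1 + u) ^ (z - 1) - (1 - u) ^ (z - 1)).

Definition mf_eq2 (beta : R) (z : nat) (u : R) : Prop :=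
  u = (1 - exp (Delta2 beta z u)) / (1 + exp (Delta2 beta z u)).

(* Main.v *)
From Stdlib Require Import Reals Lra Lia Psatz Ranalysis5.
From Coquelicot Require Import Coquelicot.
Open Scope R_scope.
Definition L (u:R) := ln (1+u) - ln (1-u).
Require Import Defs.

Lemma L_deriv u : -1 < u < 1 -> derivable_pt_lim L u (2/(1-u^2)).
Proof.
  intros Hu. apply is_derive_Reals. unfold L. auto_derive.
  - repeat split; lra.
  - field. split; [|split]; nra.
Qed.

Lemma L_cont u : -1 < u < 1 -> continuity_pt L u.
Proof. intros Hu. apply derivable_continuous_pt. exists (2/(1-u^2)). now apply L_deriv. Qed.

Lemma L_tanh b : 0 < b -> 0 < (exp b - 1)/(exp b + 1) < 1 /\ L ((exp b - 1)/(exp b + 1)) = b.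
Proof.
  intros Hb. pose proof (exp_pos b). assert (1 < exp b) by (rewrite <- exp_0; apply exp_increasing; lra).
  set (t := (exp b - 1)/(exp b + 1)).
  assert (E1 : 1 + t = 2*exp b/(exp b+1)) by (unfold t; field; lra).
  assert (E2 : 1 - t = 2/(exp b+1)) by (unfold t; field; lra).
  assert (T1 : 0 < t). { unfold t. apply Rdiv_lt_0_compat; lra. }
  assert (T2 : t < 1). { assert (0 < 2/(exp b+1)) by (apply Rdiv_lt_0_compat; lra). lra. }
  split; [lra|].
  unfold L. rewrite <- ln_div by lra.
  replace ((1 + t) / (1 - t)) with (exp b). apply ln_exp.
  rewrite E1, E2. field. lra.
Qed.

Section Abs.
Variable k : R -> R.
Variable b1 : R.
Hypothesis K1 : forall u, 0 < u < 1 -> 0 < k u < 1.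
Hypothesis K2 : forall u, 0 < u < 1 -> b1 * k u < L u.
Hypothesis K3 : forall b, b1 < b -> exists a, 0 < a < 1 /\ L a < b * k a.
Hypothesis K4 : forall x y, 0 < x -> x < y -> y < 1 -> L x * k y < L y * k x.
Hypothesis K5 : forall u, 0 < u < 1 -> continuity_pt k u.

Lemma abs_part1 b : b <= b1 -> forall u, 0 <= u < 1 -> L u = b * k u -> u = 0.
Proof.
  intros Hb u Hu HL. destruct (Req_dec u 0) as [|Hn]; auto.
  assert (Hu' : 0 < u < 1) by lra.
  pose proof (K1 u Hu'). pose proof (K2 u Hu').
  assert (b * k u <= b1 * k u) by (apply Rmult_le_compat_r; lra). lra.
Qed.

Lemma abs_part2 b : 0 < b -> b1 < b -> exists! u, 0 < u < 1 /\ L u = b * k u.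
Proof.
  intros Hb0 Hb.
  destruct (L_tanh b Hb0) as [Ht HLt].
  set (t := (exp b - 1)/(exp b + 1)) in *.
  destruct (K3 b Hb) as [a [Ha HLa]].
  pose proof (K1 t Ht) as Kt. pose proof (K1 a Ha) as Ka.
  assert (Hat : a < t).
  { destruct (Rtotal_order a t) as [H|[H|H]]; auto.
    - subst a. nra.
    - pose proof (K4 t a (proj1 Ht) H (proj2 Ha)). rewrite HLt in H0.
      assert (L a * k t < b * k a * k t) by (apply Rmult_lt_compat_r; lra).
      assert (0 < b * k a) by (apply Rmult_lt_0_compat; lra). nra. }
  set (phi := fun u => L u - b * k u).
  destruct (IVT_interv phi a t) as [u [Hu Hphi]].
  - intros c Hc. unfold phi. apply continuity_pt_minus.
    + apply L_cont. lra.
    + apply continuity_pt_mult; [apply continuity_pt_const; intros ? ?; reflexivity | apply K5; lra].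
  - exact Hat.
  - unfold phi. lra.
  - unfold phi. rewrite HLt. nra.
  - exists u. unfold phi in Hphi. split. split; [lra|lra].
    intros v [Hv HLv].
    assert (HLu : L u = b * k u) by lra.
    assert (Hu' : 0 < u < 1) by lra.
    pose proof (K1 u Hu'). pose proof (K1 v Hv).
    destruct (Rtotal_order u v) as [Hl|[Hl|Hl]]; auto.
    + pose proof (K4 u v (proj1 Hu') Hl (proj2 Hv)) as HH. rewrite HLu, HLv in HH. nra.
    + pose proof (K4 v u (proj1 Hv) Hl (proj2 Hu')) as HH. rewrite HLu, HLv in HH. nra.
Qed.
End Abs.

Lemma mvt_lt f f' a b : a < b -> (forall c, a <= c <= b -> derivable_pt_lim f c (f' c)) ->
  (forall c, a < c < b -> 0 < f' c) -> f a < f b.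
Proof.
  intros Hab Hd Hp. destruct (MVT_cor2 f f' a b Hab Hd) as [c [Hc Hc']].
  pose proof (Hp c Hc'). nra.
Qed.

Lemma pos_a u : 0 < u < 1 -> 2*u < L u.
Proof.
  intros Hu.
  assert (H := mvt_lt (fun x => L x - 2*x) (fun x => 2/(1-x^2) - 2) 0 u (proj1 Hu)).
  assert (L 0 = 0) by (unfold L; rewrite Rplus_0_r, Rminus_0_r, ln_1; ring).
  cut ((fun x => L x - 2*x) 0 < (fun x => L x - 2*x) u). { simpl. lra. }
  apply H.
  - intros c Hc. apply is_derive_Reals. unfold L. auto_derive.
    + repeat split; lra.
    + field. split; [|split]; nra.
  - intros c Hc. assert (0 < 1 - c^2) by nra.
    replace (2/(1-c^2) - 2) with (2*c^2/(1-c^2)) by (field; lra).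
    apply Rdiv_lt_0_compat; nra.
Qed.

Lemma L0 : L 0 = 0.
Proof. unfold L; rewrite Rplus_0_r, Rminus_0_r, ln_1; ring. Qed.

Lemma pos_b u : 0 < u < 1 -> 2*u + 2*u^3/3 < L u.
Proof.
  intros Hu.
  assert (H := mvt_lt (fun x => L x - (2*x + 2*x^3/3)) (fun x => 2/(1-x^2) - 2 - 2*x^2) 0 u (proj1 Hu)).
  cut ((fun x => L x - (2*x + 2*x^3/3)) 0 < (fun x => L x - (2*x + 2*x^3/3)) u). { simpl. rewrite L0. lra. }
  apply H.
  - intros c Hc. apply is_derive_Reals. unfold L. auto_derive.
    + repeat split; lra.
    + field. split; [|split]; nra.
  - intros c Hc. assert (0 < 1 - c^2) by nra.
    replace (2/(1-c^2) - 2 - 2*c^2) with (2*c^4/(1-c^2)) by (field; lra).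
    apply Rdiv_lt_0_compat; [|lra]. pose proof (pow_lt c 4 (proj1 Hc)). lra.
Qed.

Lemma pos_c u : 0 < u < 1 -> L u < 2*u/(1-u^2).
Proof.
  intros Hu.
  assert (H := mvt_lt (fun x => 2*x/(1-x^2) - L x) (fun x => 4*x^2/(1-x^2)^2) 0 u (proj1 Hu)).
  cut ((fun x => 2*x/(1-x^2) - L x) 0 < (fun x => 2*x/(1-x^2) - L x) u). { simpl. rewrite L0. lra. }
  apply H.
  - intros c Hc. apply is_derive_Reals. unfold L. auto_derive.
    + repeat split; try lra; intro HH; nra.
    + field. split; [|split]; nra.
  - intros c Hc. assert (0 < 1 - c^2) by nra.
    apply Rdiv_lt_0_compat; nra.
Qed.

Lemma pos_d u : 0 < u < 1 -> L u < 2*(3*u+u^3)/(3*(1-u^4)).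
Proof.
  intros Hu.
  assert (H := mvt_lt (fun x => 2*(3*x+x^3)/(3*(1-x^4)) - L x)
     (fun x => 2*(12*x^4+4*x^6)/(3*(1-x^4)^2)) 0 u (proj1 Hu)).
  cut ((fun x => 2*(3*x+x^3)/(3*(1-x^4)) - L x) 0 < (fun x => 2*(3*x+x^3)/(3*(1-x^4)) - L x) u).
  { simpl. rewrite L0. lra. }
  apply H.
  - intros c Hc. assert (0 < 1 - c^4) by (assert (c*c < 1) by nra; replace (c^4) with ((c*c)*(c*c)) by ring; nra). apply is_derive_Reals. unfold L. auto_derive.
    + repeat split; try lra.
    + field. repeat split; lra.
  - intros c Hc. assert (0 < 1 - c^4) by (assert (c*c < 1) by nra; replace (c^4) with ((c*c)*(c*c)) by ring; nra).
    pose proof (pow_lt c 4 (proj1 Hc)). pose proof (pow_lt c 6 (proj1 Hc)).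
    apply Rdiv_lt_0_compat; [lra|]. pose proof (pow_lt (1-c^4) 2 H0). lra.
Qed.

Lemma mono2 x y : 0 < x -> x < y -> y < 1 -> L x / x < L y / y.
Proof.
  intros Hx Hxy Hy.
  apply (mvt_lt (fun t => L t / t) (fun t => (2*t/(1-t^2) - L t)/t^2) x y Hxy).
  - intros c Hc. apply is_derive_Reals. unfold L. auto_derive.
    + repeat split; lra.
    + unfold Rminus. field. repeat split; try lra; nra.
  - intros c Hc. apply Rdiv_lt_0_compat; [|nra].
    pose proof (pos_c c ltac:(lra)). lra.
Qed.

Lemma mono4 x y : 0 < x -> x < y -> y < 1 -> L x / (3*x+x^3) < L y / (3*y+y^3).
Proof.
  intros Hx Hxy Hy.
  apply (mvt_lt (fun t => L t / (3*t+t^3)) (fun t => (2/(1-t^2)*(3*t+t^3) - L t*(3+3*t^2))/(3*t+t^3)^2) x y Hxy).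
  - intros c Hc. assert (0 < 3*c+c^3) by (pose proof (pow_lt c 3 ltac:(lra)); lra).
    apply is_derive_Reals. unfold L. auto_derive.
    + repeat split; lra.
    + unfold Rminus. field. repeat split; try lra; nra.
  - intros c Hc. assert (0 < 3*c+c^3) by (pose proof (pow_lt c 3 ltac:(lra)); lra).
    apply Rdiv_lt_0_compat; [|apply pow_lt; lra].
    pose proof (pos_d c ltac:(lra)).
    assert (0 < 1 - c^4) by (assert (c*c < 1) by nra; replace (c^4) with ((c*c)*(c*c)) by ring; nra).
    replace (2/(1-c^2)*(3*c+c^3)) with ((3+3*c^2)*(2*(3*c+c^3)/(3*(1-c^4)))).
    + assert (0 < 3 + 3*c^2) by nra.
      match goal with |- 0 < ?a * ?b - ?l * _ => replace (a*b - l*(3+3*c^2)) with (a*(b-l)) by ring end.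
      apply Rmult_lt_0_compat; lra.
    + field. split; [nra|lra].
Qed.

Lemma mf_iff b z u : -1 < u < 1 -> (mf_eq2 b z u <-> L u = - Delta2 b z u).
Proof.
  intros Hu. unfold mf_eq2. set (D := Delta2 b z u). pose proof (exp_pos D).
  split; intros H'.
  - assert (E : exp D = (1-u)/(1+u)).
    { rewrite H'. field. split; lra. }
    unfold L. rewrite <- ln_div by lra.
    replace ((1+u)/(1-u)) with (/ ((1-u)/(1+u))) by (field; lra).
    rewrite <- E, <- exp_Ropp, ln_exp. ring.
  - unfold L in H'. rewrite <- ln_div in H' by lra.
    assert (E : exp (-D) = (1+u)/(1-u)). { rewrite <- H'. apply exp_ln. apply Rdiv_lt_0_compat; lra. }
    rewrite exp_Ropp in E.
    assert (E2 : exp D = (1-u)/(1+u)).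
    { rewrite <- (Rinv_inv (exp D)), E. field. split; lra. }
    rewrite E2. field. lra.
Qed.

Lemma final z k b1 (Hb1 : 0 < b1)
  (K1 : forall u, 0 < u < 1 -> 0 < k u < 1)
  (K2 : forall u, 0 < u < 1 -> b1 * k u < L u)
  (K3 : forall b, b1 < b -> exists a, 0 < a < 1 /\ L a < b * k a)
  (K4 : forall x y, 0 < x -> x < y -> y < 1 -> L x * k y < L y * k x)
  (K5 : forall u, 0 < u < 1 -> continuity_pt k u)
  (HD : forall b u, - Delta2 b z u = b * k u) :
  exists beta1 : R, 0 < beta1 /\
    forall beta : R, 0 < beta ->
      (beta <= beta1 -> forall u : R, 0 <= u < 1 -> mf_eq2 beta z u -> u = 0) /\
      (beta1 < beta -> exists! u : R, 0 < u < 1 /\ mf_eq2 beta z u).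
Proof.
  exists b1. split; [exact Hb1|]. intros b Hb. split.
  - intros Hle u Hu Heq. apply (abs_part1 k b1 K1 K2 b Hle u Hu).
    rewrite <- HD. apply mf_iff; [lra|exact Heq].
  - intros Hlt. destruct (abs_part2 k b1 K1 K3 K4 K5 b Hb Hlt) as [u [[Hu HLu] Huniq]].
    exists u. split.
    + split; [exact Hu|]. apply mf_iff; [lra|]. rewrite HD. exact HLu.
    + intros v [Hv Hmv]. apply Huniq. split; [exact Hv|]. rewrite <- HD. apply mf_iff; [lra|exact Hmv].
Qed.

Lemma case2 z (Hz : forall b u, - Delta2 b z u = b * u) :
  exists beta1 : R, 0 < beta1 /\
    forall beta : R, 0 < beta ->
      (beta <= beta1 -> forall u : R, 0 <= u < 1 -> mf_eq2 beta z u -> u = 0) /\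
      (beta1 < beta -> exists! u : R, 0 < u < 1 /\ mf_eq2 beta z u).
Proof.
  apply (final z (fun u => u) 2); [lra | | | | | | exact Hz].
  - intros; lra.
  - intros u Hu. pose proof (pos_a u Hu). lra.
  - intros b Hb. exists ((b-2)/(2*b)).
    assert (Ha : 0 < (b-2)/(2*b) <= 1/2).
    { split. apply Rdiv_lt_0_compat; lra.
      apply (Rmult_le_reg_r (2*b)); [lra|]. unfold Rdiv. rewrite Rmult_assoc, Rinv_l by lra. lra. }
    set (a := (b-2)/(2*b)) in *.
    assert (Hab : a * (2*b) = b - 2) by (unfold a; field; lra).
    split; [lra|]. pose proof (pos_c a ltac:(lra)).
    assert (0 < 1 - a^2) by nra.
    assert (2*a/(1-a^2) <= b*a).
    { apply (Rmult_le_reg_r (1-a^2)); [lra|]. unfold Rdiv. rewrite Rmult_assoc, Rinv_l by lra. nra. }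
    lra.
  - intros x y Hx Hxy Hy. pose proof (mono2 x y Hx Hxy Hy).
    apply (Rmult_lt_compat_r (x*y)) in H; [|nra].
    replace (L x / x * (x*y)) with (L x * y) in H by (field; lra).
    replace (L y / y * (x*y)) with (L y * x) in H by (field; lra). exact H.
  - intros u _. apply continuity_pt_id.
Qed.

Lemma case4 (Hz : forall b u, - Delta2 b 4 u = b * ((3*u+u^3)/4)) :
  exists beta1 : R, 0 < beta1 /\
    forall beta : R, 0 < beta ->
      (beta <= beta1 -> forall u : R, 0 <= u < 1 -> mf_eq2 beta 4 u -> u = 0) /\
      (beta1 < beta -> exists! u : R, 0 < u < 1 /\ mf_eq2 beta 4 u).
Proof.
  apply (final 4 (fun u => (3*u+u^3)/4) (8/3)); [lra | | | | | | exact Hz].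
  - intros u Hu. assert (u^3 < 1) by (simpl; nra). assert (0 < u^3) by (apply pow_lt; lra). lra.
  - intros u Hu. pose proof (pos_b u Hu). lra.
  - intros b Hb. exists ((3*b-8)/(6*b)).
    assert (Ha : 0 < (3*b-8)/(6*b) <= 1/2).
    { split. apply Rdiv_lt_0_compat; lra.
      apply (Rmult_le_reg_r (6*b)); [lra|]. unfold Rdiv. rewrite Rmult_assoc, Rinv_l by lra. lra. }
    set (a := (3*b-8)/(6*b)) in *.
    assert (Hab : a * (6*b) = 3*b - 8) by (unfold a; field; lra).
    split; [lra|]. pose proof (pos_d a ltac:(lra)).
    assert (A4 : a^4 <= a) by (replace (a^4) with ((a*a)*(a*a)) by ring; assert (a*a <= a) by nra; assert (0 <= a*a) by nra; assert (a*a*(a*a) <= a*a) by nra; lra).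
    assert (0 < 1 - a^4) by lra.
    assert (0 < 3*a+a^3) by (pose proof (pow_lt a 3 ltac:(lra)); lra).
    assert (2*(3*a+a^3)/(3*(1-a^4)) <= b*((3*a+a^3)/4)).
    { apply (Rmult_le_reg_r (3*(1-a^4))); [lra|]. unfold Rdiv. rewrite Rmult_assoc, Rinv_l by lra.
      rewrite Rmult_1_r.
      assert (8 <= 3*b*(1-a^4)) by nra. nra. }
    lra.
  - intros x y Hx Hxy Hy. pose proof (mono4 x y Hx Hxy Hy).
    assert (0 < 3*x+x^3) by (pose proof (pow_lt x 3 ltac:(lra)); lra).
    assert (0 < 3*y+y^3) by (pose proof (pow_lt y 3 ltac:(lra)); lra).
    apply (Rmult_lt_compat_r ((3*x+x^3)*(3*y+y^3)/4)) in H; [|apply Rdiv_lt_0_compat; nra].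
    replace (L x / (3*x+x^3) * ((3*x+x^3)*(3*y+y^3)/4)) with (L x * ((3*y+y^3)/4)) in H by (field; lra).
    replace (L y / (3*y+y^3) * ((3*x+x^3)*(3*y+y^3)/4)) with (L y * ((3*x+x^3)/4)) in H by (field; lra).
    exact H.
  - intros u _. apply derivable_continuous_pt. exists ((3+3*u^2)/4).
    apply is_derive_Reals. auto_derive; [auto|field].
Qed.

Theorem lemma5p6 (z : nat) (hz2 : (2 <= z)%nat) (hz4 : (z <= 4)%nat) :
  exists beta1 : R, 0 < beta1 /\
    forall beta : R, 0 < beta ->
      (beta <= beta1 -> forall u : R, 0 <= u < 1 -> mf_eq2 beta z u -> u = 0) /\
      (beta1 < beta -> exists! u : R, 0 < u < 1 /\ mf_eq2 beta z u).
Proof.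
  assert (z = 2%nat \/ z = 3%nat \/ z = 4%nat) as [->|[->| ->]] by lia.
  - apply case2. intros b u. unfold Delta2. simpl. field.
  - apply case2. intros b u. unfold Delta2. simpl. field.
  - apply case4. intros b u. unfold Delta2. simpl. field.
Qed.
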